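(* Suppose that the Colour alignment problem always has a solution (for all positive integers $m,n$ and every initial distribution of balls). Then every finite $0$-rectangular band that has a permutation matching has an involution matching.
   Context: Colour alignment problem: there are $m$ girls and $mn$ (distinct) balls, each girl holding $n$ balls, and there are exactly $m$ balls of each of $n$ colours. An exchange consists of two girls swapping one ball each (one ball for one ball, so each girl still holds $n$ balls); no ball may participate in more than one exchange. A solution is a set of such exchanges after which each girl holds balls of all $n$ colours (hence exactly one ball of each colour). A finite $0$-rectangular band with $m$ rows and $n$ columns: $S=(R\times C)\cup\{0\}$ with $R=\{1,\dots,m\}$, $C=\{1,\dots,n\}$, and a set $E\subseteq R\times C$ meeting every row and every column; multiplication is $(i,j)(k,l)=(i,l)$ if $(k,j)\in E$ and $0$ otherwise, with $0$ a zero element. For $x\in S$, $V(x)=\{y\in S: xyx=x,\ yxy=y\}$. A permutation matching of $S$ is a bijection $\phi:S\to S$ with $\phi(x)\in V(x)$ for all $x$; an involution matching is a permutation matching $\phi$ with $\phi\circ\phi=\mathrm{id}_S$. *)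

(* Defs.v *)
From mathcomp Require Import all_boot.
Set Implicit Arguments. Unset Strict Implicit. Unset Printing Implicit Defensive.

(* ---------- Colour alignment problem ----------
   Girls are 'I_m; the mn distinct balls are 'I_m * 'I_n, ball (i,j) being the
   j-th ball initially held by girl i (so each girl holds n balls).
   An initial distribution is a colouring col : ball -> 'I_n with exactly m
   balls of each colour.  A set of exchanges (each ball in at most one
   exchange, each exchange between two different girls swapping one ball each)
   is encoded by the involution sigma sending a ball to the ball it is swapped
   with (sigma b = b if b takes part in no exchange).  After the exchanges,
   ball b is held by the girl (sigma b).1. *)

Definition exchange_set m n (sigma : 'I_m * 'I_n -> 'I_m * 'I_n) : Prop :=
  (forall b, sigma (sigma b) = b) /\
  (forall b, sigma b <> b -> (sigma b).1 <> b.1).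

Definition is_solution m n (col : 'I_m * 'I_n -> 'I_n)
    (sigma : 'I_m * 'I_n -> 'I_m * 'I_n) : Prop :=
  exchange_set sigma /\
  (forall (i : 'I_m) (c : 'I_n), exists b, (sigma b).1 = i /\ col b = c).

Definition colour_alignment_always_solvable : Prop :=
  forall m n : nat, 0 < m -> 0 < n ->
  forall col : 'I_m * 'I_n -> 'I_n,
    (forall c : 'I_n, #|[set b | col b == c]| = m) ->
    exists sigma, is_solution col sigma.

(* ---------- Finite 0-rectangular bands ----------
   S = (R x C) u {0} is represented by option ('I_m * 'I_n), None being 0. *)

Definition zero_rect_band_set m n (E : {set 'I_m * 'I_n}) : Prop :=
  (forall i : 'I_m, exists j : 'I_n, (i, j) \in E) /\
  (forall j : 'I_n, exists i : 'I_m, (i, j) \in E).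

Definition rb_mul m n (E : {set 'I_m * 'I_n})
    (x y : option ('I_m * 'I_n)) : option ('I_m * 'I_n) :=
  match x, y with
  | Some (i, j), Some (k, l) => if (k, j) \in E then Some (i, l) else None
  | _, _ => None
  end.

Definition in_V (S : Type) (mul : S -> S -> S) (x y : S) : Prop :=
  mul (mul x y) x = x /\ mul (mul y x) y = y.

Definition permutation_matching (S : Type) (mul : S -> S -> S) (phi : S -> S) : Prop :=
  bijective phi /\ forall x, in_V mul x (phi x).

Definition involution_matching (S : Type) (mul : S -> S -> S) (phi : S -> S) : Prop :=
  permutation_matching mul phi /\ forall x, phi (phi x) = x.

(* Main.v *)
Require Import Defs.
From mathcomp Require Import all_boot.

Theorem theorem2p4 :
  colour_alignment_always_solvable ->
  forall (m n : nat) (E : {set 'I_m * 'I_n}),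
    0 < m -> 0 < n -> zero_rect_band_set E ->
    (exists phi, permutation_matching (rb_mul E) phi) ->
    exists phi, involution_matching (rb_mul E) phi.
Proof.
move=> Hsol m n E m0 n0 _ [phi [phib phiV]].
have phiS : forall x, exists y, phi (Some x) = Some y.
  move=> [i j]; case: (phiV (Some (i, j))) => H1 _; move: H1.
  by case: (phi (Some (i, j))) => [y|] //= _; exists y.
pose pi x := if phi (Some x) is Some y then y else x.
have piE x : phi (Some x) = Some (pi x).
  by rewrite /pi; case: (phiS x) => y ->.
have piinj : injective pi.
  move=> x y e; apply: Some_inj; apply: (bij_inj phib); by rewrite !piE e.
have piV : forall x, ((pi x).1, x.2) \in E /\ (x.1, (pi x).2) \in E.
  move=> [i j]; case: (phiV (Some (i, j))) => H1 _; move: H1; rewrite piE.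
  case: (pi (i, j)) => k l /=.
  by case: ifP => // Hkj /=; case: ifP.
pose col b := (pi b).2.
have Hcol : forall c, #|[set b | col b == c]| = m.
  move=> c.
  have -> : [set b | col b == c] = pi @^-1: [set y | y.2 == c]
    by apply/setP=> b; rewrite !inE.
  rewrite card_preimset //.
  have -> : [set y : 'I_m * 'I_n | y.2 == c] = setX setT [set c]
    by apply/setP=> -[i j]; rewrite !inE.
  by rewrite cardsX cardsT card_ord cards1 muln1.
case: (Hsol m n m0 n0 col Hcol) => sigma [[sinv _] Hex].
pose P (x b : 'I_m * 'I_n) := ((sigma b).1 == x.1) && (col b == x.2).
have HP x : exists b, P x b.
  by case: (Hex x.1 x.2) => b [e1 e2]; exists b; rewrite /P e1 e2 !eqxx.
pose f x := odflt x [pick b | P x b].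
have fP x : P x (f x).
  rewrite /f; case: pickP => //= H; case: (HP x) => b Hb; by rewrite H in Hb.
have funiq : forall x b, P x b -> f x = b.
  have finj : injective f.
    move=> x y e; have := fP x; have := fP y; rewrite /P e.
    case: x y e => [x1 x2] [y1 y2] /= _ /andP[/eqP -> /eqP ->] /andP[/eqP -> /eqP ->].
    done.
  have [g fg gf] := injF_bij finj.
  move=> x b Pb; rewrite -(gf b); congr f.
  have := fP (g b); rewrite gf; move: Pb; rewrite /P.
  case: x (g b) => [x1 x2] [y1 y2] /= /andP[/eqP -> /eqP ->] /andP[/eqP -> /eqP ->].
  done.
pose psi x := ((f x).1, col (sigma (f x))).
have psiK x : psi (psi x) = x.
  rewrite /psi; have := fP x; set b := f x => Pb.
  have -> : f (b.1, col (sigma b)) = sigma b.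
    by apply: funiq; rewrite /P /= sinv !eqxx.
  rewrite sinv; move: Pb; rewrite /P => /andP[/eqP -> /eqP ->]; by case: x {b}.
pose phi' o := if o is Some x then Some (psi x) else None.
have inv : forall o, phi' (phi' o) = o by case=> //= x; rewrite psiK.
exists phi'; split; last exact: inv.
split; first exact: inv_bij inv.
case=> [[i j]|]; last by split.
have := fP (i, j); rewrite /P /=; set b := f (i, j) => /andP[/eqP e1 /eqP e2].
have H1 : (b.1, j) \in E.
  by rewrite -e2; exact: (proj2 (piV _)).
have H2 : (i, col (sigma b)) \in E.
  by rewrite -e1; exact: (proj2 (piV _)).
rewrite /in_V /phi' /psi -/b.
move: H1 H2; clear e1 e2; case: b => k l /=; set l' := col _ => H1 H2.
by rewrite /= H1 /= H2 /= ?H1.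
Qed.
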